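(* Let $N\ge1$, $K\ge1$, $n_v\ge0$, and assume the row-stochastic matrix $\mathbf{T}\in[0,1]^{K\times K}$ is irreducible and aperiodic. Let $X(\cdot)$ be the probabilistic cellular automaton on $[K]^N$ with local transition matrix $\mathbf{T}$ and global transition matrix $\mathbf{P}$. Then $X(\cdot)$ is irreducible, aperiodic, and hence ergodic. In particular, there exists a unique stationary distribution $\pi$ on $[K]^N$, all states are positive recurrent, $\lim_{t\to\infty}\mathbb{P}(X(t)=\cdot)=\pi(\cdot)$, and there exist $C\in(0,\infty)$, $\rho\in(0,1)$ and $t_0\in\mathbb{N}$ such that $\|\mathbf{P}^t(x,\cdot)-\pi\|_{TV}\le C\rho^t$ for all $t\ge t_0$ and all $x\in[K]^N$, where $\|\cdot\|_{TV}:=\|\cdot\|_1$.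
   Context: Vertices $[N]=\{1,\dots,N\}$ are arranged on a cycle; for $n\in[N]$, $V_n\subset[N]$ is the set of residues modulo $N$ of $n-n_v,\dots,n+n_v$, and $|V_n|$ its cardinality. The probabilistic cellular automaton is the Markov chain $X(t)=(X_1(t),\dots,X_N(t))$ on $[K]^N$ with transition matrix $\mathbf{P}(x,y)=\prod_{n=1}^N \frac{1}{|V_n|}\sum_{i\in V_n}\mathbf{T}_{x_i,y_n}$. Here $\|\mu\|_1=\sum_{y}|\mu(y)|$. *)

(* Defs.v *)
From HB Require Import structures.
From mathcomp Require Import all_boot all_order all_algebra.
From mathcomp Require Import all_classical all_reals all_analysis.
Set Implicit Arguments. Unset Strict Implicit. Unset Printing Implicit Defensive.
Import Order.TTheory GRing.Theory Num.Theory.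
Import numFieldNormedType.Exports.
Local Open Scope classical_set_scope.
Local Open Scope ring_scope.

Section Kernels.
Variables (R : realType) (S : finType).

Definition kid : S -> S -> R := fun x y => (x == y)%:R.
Definition kmul (A B : S -> S -> R) : S -> S -> R :=
  fun x z => \sum_(y : S) A x y * B y z.
Definition kpow (P : S -> S -> R) (t : nat) : S -> S -> R :=
  iter t (fun M => kmul M P) kid.

Definition row_stochastic (P : S -> S -> R) : Prop :=
  (forall x y, 0 <= P x y) /\ (forall x, \sum_(y : S) P x y = 1).

Definition irreducible (P : S -> S -> R) : Prop :=
  forall x y, exists t : nat, 0 < kpow P t x y.

(* period of x equal to 1: the gcd of {t >= 1 : P^t(x,x) > 0} is 1,
   i.e. the only common divisor of that set is 1. *)
Definition aperiodic_state (P : S -> S -> R) (x : S) : Prop :=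
  forall d : nat, (forall t : nat, (0 < t)%N -> 0 < kpow P t x x -> (d %| t)%N) ->
  d = 1%N.
Definition aperiodic (P : S -> S -> R) : Prop := forall x, aperiodic_state P x.

(* P_x(tau_x^+ = t), t >= 1, where tau_x^+ is the first return time to x:
   sum over paths x -> y1 -> ... -> y_{t-1} -> x with all y_i <> x. *)
Definition taboo (P : S -> S -> R) (x : S) : S -> S -> R :=
  fun y z => if z == x then 0 else P y z.
Definition first_return (P : S -> S -> R) (x : S) (t : nat) : R :=
  kmul (kpow (taboo P x) t.-1) P x x.

(* x is positive recurrent: return to x happens a.s. and E_x[tau_x^+] < oo *)
Definition positive_recurrent (P : S -> S -> R) (x : S) : Prop :=
  ((fun n : nat => \sum_(1 <= t < n) first_return P x t) @ \oo --> (1 : R))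
  /\ cvg ((fun n : nat => \sum_(1 <= t < n) t%:R * first_return P x t) @ \oo).

Definition prob_dist (mu : S -> R) : Prop :=
  (forall x, 0 <= mu x) /\ \sum_(x : S) mu x = 1.

Definition stationary (P : S -> S -> R) (pi : S -> R) : Prop :=
  prob_dist pi /\ forall y, \sum_(x : S) pi x * P x y = pi y.

End Kernels.

(* Cyclic neighbourhood V_n (0-indexed vertices 'I_N):
   residues mod N of n - nv, ..., n + nv. Adding N*nv avoids truncated
   subtraction: (n + k + N*nv - nv) %% N = (n + k - nv) mod N for k < 2nv+1, N>=1. *)
Definition nbhd (N nv : nat) (n : 'I_N) : {set 'I_N} :=
  [set i : 'I_N | [exists k : 'I_(2 * nv + 1),
     (i : nat) == ((n + k + N * nv - nv) %% N)%N]].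

Definition pca_P (R : realType) (N K nv : nat) (T : 'M[R]_K)
  (x y : {ffun 'I_N -> 'I_K}) : R :=
  \prod_(n : 'I_N) ((#|nbhd nv n|%:R)^-1 * \sum_(i in nbhd nv n) T (x i) (y n)).

(* Main.v *)
Require Import Defs.
From HB Require Import structures.
From mathcomp Require Import all_boot all_order all_algebra.
From mathcomp Require Import all_classical all_reals all_analysis.
From mathcomp Require Import ring lra zify.
From Stdlib Require Classical_Prop.
Import Order.TTheory GRing.Theory Num.Theory.
Import numFieldNormedType.Exports.
Set Implicit Arguments. Unset Strict Implicit. Unset Printing Implicit Defensive.

Section NT.
Variable A : nat -> Prop.
Hypothesis Apos : forall t, A t -> 0 < t.
Hypothesis Aadd : forall s t, A s -> A t -> A (s + t).
Hypothesis Agcd : forall d, (forall t, A t -> d %| t) -> d = 1.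

Let A0 n := n = 0 \/ A n.

Lemma A0add s t : A0 s -> A0 t -> A0 (s + t).
Proof.
case=> [->|hs]; first by [].
case=> [->|ht]; first by rewrite addn0; right.
by right; apply: Aadd.
Qed.

Lemma A0mul a n : A0 n -> A0 (a * n).
Proof.
move=> hn; elim: a => [|a IH]; first by left.
by rewrite mulSn; apply: A0add.
Qed.

Let Good g := exists p, A0 p /\ A0 (p + g).

Lemma good_step g : 1 < g -> Good g -> exists g', 0 < g' < g /\ Good g'.
Proof.
move=> g1 [p [hp hpg]].
have [t [At ndiv]] : exists t, A t /\ ~~ (g %| t).
  apply: Classical_Prop.NNPP => H.
  have e : g = 1.
    apply: Agcd => t At; apply: Classical_Prop.NNPP => nd; apply: H; exists t; split => //.
    by apply/negP.
  by move: g1; rewrite e.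
have t0 := Apos At.
have [a _ ha] := Bezoutl g t0.
have [b hb] := dvdnP ha.
exists (gcdn t g); split.
  apply/andP; split; first by rewrite gcdn_gt0 t0.
  rewrite ltn_neqAle dvdn_leq ?(ltnW g1) ?dvdn_gcdr // andbT.
  apply/negP => /eqP e; move/negP: ndiv; apply; rewrite -e dvdn_gcdl //.
exists (a * (p + g)); split; first exact: A0mul.
have -> : a * (p + g) + gcdn t g = b * t + a * p.
  rewrite -hb; nia.
apply: A0add; last exact: A0mul.
by apply: A0mul; right.
Qed.

Lemma good_one : exists p, A0 p /\ A0 (p + 1).
Proof.
have [a0 Aa0] : exists a, A a.
  apply: Classical_Prop.NNPP => H; have := Agcd (d := 2) => h.
  suff: 2 = 1 by [].
  by apply: h => t At; exfalso; apply: H; exists t.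
have hg0 : Good a0 by exists 0; split; [left | right].
suff H : forall k g, 0 < g <= k -> Good g -> Good 1.
  by apply: (H a0 a0) => //; rewrite leqnn Apos.
elim=> [|k IH] g.
  by case/andP=> g0 gk; move: g0; rewrite leqn0 in gk; rewrite (eqP gk).
case/andP=> g0 gk hg.
case: (ltngtP g 1) => [|g1|e1]; first by lia.
  2: by rewrite -e1.

have [g' [hg' Gg']] := good_step g1 hg.
apply: (IH g') => //; case/andP: hg' => -> /= h; lia.
Qed.

Lemma semigroup_large : exists L, forall n, L <= n -> A n.
Proof.
have [p [hp hp1]] := good_one.
exists (p * p).+1 => n hn.
have n0 : 0 < n by lia.
suff : A0 n by case=> // e; move: n0; rewrite e.
case: (posnP p) => [p0|ppos].
  move: hp1; rewrite p0 add0n => h1.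
  by rewrite -(muln1 n); apply: A0mul.
rewrite (divn_eq n p).
have hk : p <= n %/ p.
  by rewrite leq_divRL //; lia.
have hr : n %% p < p by rewrite ltn_mod.
have -> : n %/ p * p + n %% p = (n %/ p - n %% p) * p + n %% p * (p + 1).
  rewrite mulnDr muln1 mulnBl; nia.
apply: A0add; exact: A0mul.
Qed.

End NT.

Local Open Scope classical_set_scope.
Local Open Scope ring_scope.

Section KAlg.
Variables (R : realType) (S : finType).
Implicit Types (A B C P : S -> S -> R).

Lemma kmulA A B C : kmul (kmul A B) C = kmul A (kmul B C).
Proof.
apply/funext => x; apply/funext => z; rewrite /kmul.
under eq_bigr => y _ do rewrite big_distrl /=.
rewrite exchange_big /=; apply: eq_bigr => w _.
rewrite big_distrr /=; apply: eq_bigr => y _; by rewrite mulrA.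
Qed.

Lemma kmul1l A : kmul (@kid R S) A = A.
Proof.
apply/funext => x; apply/funext => z; rewrite /kmul /kid.
rewrite (bigD1 x) //= eqxx mul1r big1 ?addr0 // => y /negPf.
by rewrite eq_sym => ->; rewrite mul0r.
Qed.

Lemma kmul1r A : kmul A (@kid R S) = A.
Proof.
apply/funext => x; apply/funext => z; rewrite /kmul /kid.
rewrite (bigD1 z) //= eqxx mulr1 big1 ?addr0 // => y /negPf ->.
by rewrite mulr0.
Qed.

Lemma kpowS P t : kpow P t.+1 = kmul (kpow P t) P.
Proof. by []. Qed.

Lemma kpow1 P : kpow P 1 = P.
Proof. by rewrite kpowS /= kmul1l. Qed.

Lemma kpow_add P s t : kpow P (s + t) = kmul (kpow P s) (kpow P t).
Proof.
elim: t => [|t IH]; first by rewrite addn0 /= kmul1r.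
by rewrite addnS !kpowS IH kmulA.
Qed.

Lemma kpow1S P t : kpow P t.+1 = kmul P (kpow P t).
Proof. by rewrite -add1n kpow_add kpow1. Qed.

Lemma kmul_ge0 A B : (forall x y, 0 <= A x y) -> (forall x y, 0 <= B x y) ->
  forall x y, 0 <= kmul A B x y.
Proof. by move=> HA HB x y; apply: sumr_ge0 => z _; apply: mulr_ge0. Qed.

Lemma kid_ge0 x y : 0 <= @kid R S x y.
Proof. by rewrite /kid ler0n. Qed.

Lemma kpow_ge0 P : (forall x y, 0 <= P x y) -> forall t x y, 0 <= kpow P t x y.
Proof.
move=> HP; elim=> [|t IH] x y; first exact: kid_ge0.
by rewrite kpowS; apply: kmul_ge0.
Qed.

Lemma sum_kid x : \sum_y @kid R S x y = 1.
Proof.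
rewrite /kid (bigD1 x) //= eqxx big1 ?addr0 // => y /negPf.
by rewrite eq_sym => ->.
Qed.

Lemma kmul_sum1 A B : (forall x, \sum_y B x y = 1) ->
  forall x, \sum_y kmul A B x y = \sum_y A x y.
Proof.
move=> HB x; rewrite /kmul exchange_big /=; apply: eq_bigr => z _.
by rewrite -big_distrr /= HB mulr1.
Qed.

Lemma kpow_sum1 P : (forall x, \sum_y P x y = 1) ->
  forall t x, \sum_y kpow P t x y = 1.
Proof.
move=> HP; elim=> [|t IH] x; first exact: sum_kid.
by rewrite kpowS kmul_sum1.
Qed.

Lemma kpow_le1 P : row_stochastic P -> forall t x y, kpow P t x y <= 1.
Proof.
move=> [HP0 HP1] t x y; rewrite -(kpow_sum1 HP1 t x) (bigD1 y) //=.
by rewrite lerDl; apply: sumr_ge0 => z _; apply: kpow_ge0.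
Qed.

Lemma kpow_add_ge P : (forall x y, 0 <= P x y) ->
  forall s t a z b, kpow P s a z * kpow P t z b <= kpow P (s + t) a b.
Proof.
move=> HP s t a z b; rewrite kpow_add /kmul (bigD1 z) //= lerDl.
by apply: sumr_ge0 => w _; apply: mulr_ge0; apply: kpow_ge0.
Qed.

End KAlg.

Section Gen.
Variable R : realType.

Lemma cvg_geo0 (C rho : R) : 0 <= rho < 1 ->
  (fun n : nat => C * rho ^+ n) @ \oo --> (0 : R).
Proof.
move=> /andP[r0 r1]; rewrite -(mulr0 C); apply: cvgMr.
by apply: cvg_expr; rewrite ger0_norm.
Qed.

Lemma cvg_bound (u : nat -> R) (l C rho : R) : 0 <= rho < 1 ->
  (forall n, `|u n - l| <= C * rho ^+ n) -> u @ \oo --> l.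
Proof.
move=> hr hb.
apply: (@squeeze_cvgr _ _ _ _ (fun n => l - C * rho ^+ n) (fun n => l + C * rho ^+ n)).
- apply: nearW => n; have := hb n; rewrite ler_distl => /andP[h1 h2].
  by rewrite h1 h2.
- rewrite -[X in _ --> X]subr0; apply: cvgB; [exact: cvg_cst | exact: cvg_geo0].
- rewrite -[X in _ --> X]addr0; apply: cvgD; [exact: cvg_cst | exact: cvg_geo0].
Qed.

Lemma vanish (q C rho : R) : 0 <= rho < 1 ->
  (forall n : nat, `|q| <= C * rho ^+ n) -> q = 0.
Proof.
move=> hr hb.
have h : (fun _ : nat => q) @ \oo --> (0 : R).
  by apply: (cvg_bound hr) => n; rewrite subr0.
have h1 := cvg_lim (@Rhausdorff R) h.
have h2 : (fun _ : nat => q) @ \oo --> q by exact: cvg_cst.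
have h3 := cvg_lim (@Rhausdorff R) h2.
by rewrite -(h1 eventually_filter) -[X in X = _](h3 eventually_filter).
Qed.

Lemma vanish_le (q C rho : R) : 0 <= rho < 1 -> 0 <= C ->
  (forall n : nat, q <= C * rho ^+ n) -> q <= 0.
Proof.
move=> hr C0 hb.
have : Num.max q 0 = 0.
  apply: (vanish (C:=C) hr) => n; rewrite ger0_norm ?le_max ?lexx ?orbT //.
  rewrite ge_max hb /=; apply: mulr_ge0 => //.
  by case/andP: hr => r0 _; apply: exprn_ge0.
by move=> e; rewrite -e le_max lexx.
Qed.

Lemma bernoulli (b : R) (n : nat) : 0 <= b <= 1 -> 1 - n%:R * b <= (1 - b) ^+ n.
Proof.
move=> /andP[b0 b1]; elim: n => [|n IH]; first by rewrite mul0r subr0 expr0.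
rewrite exprSr; apply: le_trans (_ : (1 - n%:R * b) * (1 - b) <= _).
  have n0 : 0 <= n%:R :> R by rewrite ler0n.
  rewrite -natr1; nra.
by apply: ler_wpM2r; lra.
Qed.

Lemma geom (rho0 : R) (m : nat) : 0 <= rho0 < 1 -> (0 < m)%N ->
  exists C rho : R, 0 < C /\ 0 < rho < 1 /\
    forall t : nat, rho0 ^+ (t %/ m) <= C * rho ^+ t.
Proof.
move=> /andP[r0 r1] m0.
set a := 1 - rho0.
have mR : 0 < m%:R :> R by rewrite ltr0n.
set b := a / (2 * m%:R).
have b0 : 0 < b by rewrite divr_gt0 // ?mulr_gt0 // subr_gt0.
have b1 : b <= 1 / 2.
  rewrite /b ler_pdivrMr ?mulr_gt0 //.
  have : 1 <= m%:R :> R by rewrite ler1n.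
  rewrite /a; nra.
set rho := 1 - b.
have rhop : 0 < rho by rewrite /rho; lra.
have rho1 : rho < 1 by rewrite /rho; lra.
have hm : rho0 <= rho ^+ m.
  apply: le_trans (bernoulli m _); last by apply/andP; split; lra.
  have e : m%:R * b = a / 2.
    rewrite /b; field; by rewrite gt_eqF.
  rewrite e /a; lra.
exists (rho ^+ m)^-1, rho; split; first by rewrite invr_gt0 exprn_gt0.
split; first by rewrite rhop rho1.
move=> t; rewrite {2}(div.divn_eq t m) exprD.
set k := (t %/ m)%N.
apply: le_trans (_ : rho ^+ (k * m) <= _).
  rewrite mulnC exprM; apply: lerXn2r; rewrite ?nnegrE //; lra.
rewrite mulrC -ler_pdivrMr ?invr_gt0 ?exprn_gt0 // invrK.
apply: ler_wpM2l; first by rewrite exprn_ge0 // ltW.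
apply: ler_wiXn2l; [exact: ltW | exact: ltW | ].
by rewrite ltnW // ltn_mod.
Qed.

End Gen.

Section Osc.
Variables (R : realType) (S : finType).

Lemma osc_comb (g h f : S -> R) (e : R) :
  (forall y, 0 <= g y) -> (forall y, 0 <= h y) ->
  \sum_y g y = \sum_y h y -> (forall y z, f y - f z <= e) ->
  \sum_y g y * f y - \sum_y h y * f y <= (\sum_y g y) * e.
Proof.
move=> g0 h0 gh fe.
have s0 : 0 <= \sum_y g y by apply: sumr_ge0.
case: (eqVneq (\sum_y g y) 0) => [s00 | sn0].
  have gz := psumr_eq0P (fun i _ => g0 i) s00.
  have hz : \sum_y h y = 0 by rewrite -gh.
  have hz' := psumr_eq0P (fun i _ => h0 i) hz.
  rewrite s00 mul0r !big1 ?subrr // => y _; by rewrite ?gz ?hz' // mul0r.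
have sp : 0 < \sum_y g y by rewrite lt_def sn0 s0.
rewrite -(ler_pM2l sp).
have E : (\sum_y g y) * (\sum_y g y * f y - \sum_y h y * f y) =
    \sum_y \sum_z g y * h z * (f y - f z).
  transitivity (\sum_y \sum_z g y * h z * f y - \sum_y \sum_z g y * h z * f z).
    rewrite mulrBr; congr (_ - _).
      rewrite {1}gh mulrC big_distrl /=; apply: eq_bigr => y _.
      by rewrite big_distrr /=; apply: eq_bigr => z _; ring.
    rewrite big_distrl /=; apply: eq_bigr => y _.
    by rewrite big_distrr /=; apply: eq_bigr => z _; ring.
  rewrite -sumrB; apply: eq_bigr => y _; rewrite -sumrB; apply: eq_bigr => z _.
  by ring.
rewrite E.
have E2 : (\sum_y g y) * ((\sum_y g y) * e) = \sum_y \sum_z g y * h z * e.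
  rewrite {2}gh big_distrl /=; apply: eq_bigr => y _.
  rewrite big_distrl big_distrr /=; apply: eq_bigr => z _; ring.
rewrite E2; apply: ler_sum => y _; apply: ler_sum => z _.
by apply: ler_wpM2l; [apply: mulr_ge0 | apply: fe].
Qed.

End Osc.

Section Markov.
Variables (R : realType) (S : finType) (P : S -> S -> R) (m : nat) (z0 : S).
Hypotheses (HP : row_stochastic P) (Hm : (0 < m)%N)
  (Hpos : forall a b, 0 < kpow P m a b).

Let P0 : forall a b, 0 <= P a b := proj1 HP.
Let P1 : forall a, \sum_b P a b = 1 := proj2 HP.

Definition delta := \prod_(p : S * S) kpow P m p.1 p.2.

Lemma delta_gt0 : 0 < delta.
Proof. by apply: prodr_gt0 => p _; apply: Hpos. Qed.

Lemma delta_le a b : delta <= kpow P m a b.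
Proof.
rewrite /delta (bigD1 (a, b)) //=; apply: ler_piMr; first exact: ltW.
apply: prodr_ile1 => p _; apply/andP; split; first exact: ltW.
exact: kpow_le1.
Qed.

Definition rho0 := 1 - delta.

Lemma rho0_ge0 : 0 <= rho0.
Proof. have := delta_le z0 z0; have := kpow_le1 HP m z0 z0; rewrite /rho0; lra. Qed.

Lemma rho0_lt1 : rho0 < 1.
Proof. have := delta_gt0; rewrite /rho0; lra. Qed.

Definition osc (F : S -> R) e := forall z w, F z - F w <= e.

Lemma card_pos : (0 < #|S|)%N.
Proof. by apply/card_gt0P; exists z0. Qed.

Lemma osc_S t y e : osc (fun z => kpow P t z y) e -> osc (fun z => kpow P t.+1 z y) e.
Proof.
move=> H z w; rewrite !kpow1S /kmul.
have := osc_comb (f := fun v => kpow P t v y) (P0 z) (P0 w) _ H.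
by rewrite !P1 mul1r; apply.
Qed.

Lemma osc_m t y e : osc (fun z => kpow P t z y) e ->
  osc (fun z => kpow P (m + t) z y) (rho0 * e).
Proof.
move=> H z w; rewrite !kpow_add /kmul.
have e0 : 0 <= e by have := H z z; rewrite subrr.
set f := fun v => kpow P t v y.
set G := kpow P m.
have sb : forall a, \sum_v (G a v - delta) * f v =
    \sum_v G a v * f v - \sum_v delta * f v.
  by move=> a; rewrite -sumrB; apply: eq_bigr => v _; rewrite mulrBl.
have sG : forall a, \sum_v (G a v - delta) = 1 - delta *+ #|S|.
  by move=> a; rewrite sumrB kpow_sum1 ?sumr_const //; case: HP.
have -> : \sum_v G z v * f v - \sum_v G w v * f v =
   \sum_v (G z v - delta) * f v - \sum_v (G w v - delta) * f v.
  by rewrite !sb; ring.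
have g0 : forall a v, 0 <= G a v - delta by move=> a v; rewrite subr_ge0 delta_le.
apply: le_trans (osc_comb (g0 z) (g0 w) _ H) _; first by rewrite !sG.
rewrite sG; apply: ler_wpM2r => //; rewrite /rho0 lerB //.
rewrite -(prednK card_pos) mulrS lerDl mulrn_wge0 //; exact: ltW delta_gt0.
Qed.

Lemma osc0 y : osc (fun z => kpow P 0 z y) 1.
Proof.
move=> z w /=; have h1 : kid R z y <= 1 by rewrite /kid lern1 leq_b1.
have h2 := kid_ge0 R w y; lra.
Qed.

Lemma osc_r y r : osc (fun z => kpow P r z y) 1.
Proof. elim: r => [|r IH]; [exact: osc0 | exact: osc_S]. Qed.

Lemma osc_km y k r : osc (fun z => kpow P (k * m + r) z y) (rho0 ^+ k).
Proof.
elim: k => [|k IH]; first by rewrite mul0n add0n expr0; apply: osc_r.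
by rewrite mulSn -addnA exprS; apply: osc_m.
Qed.

Definition eps t := rho0 ^+ (t %/ m)%N.

Lemma eps_ge0 t : 0 <= eps t.
Proof. exact/exprn_ge0/rho0_ge0. Qed.

Lemma osc_eps y t : osc (fun z => kpow P t z y) (eps t).
Proof. by rewrite {1}(div.divn_eq t m); apply: osc_km. Qed.

Lemma kid_mix (F : S -> R) b : \sum_z kid R b z * F z = F b.
Proof.
rewrite (bigD1 b) //= /kid eqxx mul1r big1 ?addr0 // => z /negPf.
by rewrite eq_sym => ->; rewrite mul0r.
Qed.

Lemma cross y t e : osc (fun z => kpow P t z y) e -> forall u a b,
  kpow P (u + t) a y - kpow P t b y <= e /\ kpow P t b y - kpow P (u + t) a y <= e.
Proof.
move=> H u a b; rewrite kpow_add /kmul.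
rewrite -[kpow P t b y](kid_mix (fun z => kpow P t z y)).
have g0 := kpow_ge0 P0 u a.
have h0 := kid_ge0 R b.
have s1 : \sum_z kpow P u a z = 1 by apply: kpow_sum1.
have s2 : \sum_z kid R b z = 1 by apply: sum_kid.
split.
  apply: le_trans (osc_comb (f := fun z => kpow P t z y) g0 h0 _ H) _.
    by rewrite s1 s2.
  by rewrite s1 mul1r.
apply: le_trans (osc_comb (f := fun z => kpow P t z y) h0 g0 _ H) _.
  by rewrite s1 s2.
by rewrite s2 mul1r.
Qed.

Lemma key_bound y s t a : kpow P s z0 y - eps s <= kpow P t a y + eps t.
Proof.
have es := eps_ge0 s; have et := eps_ge0 t.
case: (leqP t s) => hts.
  have := (cross (osc_eps y t) (s - t) z0 a).1; rewrite subnK //; lra.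
have := (cross (osc_eps y s) (t - s) a z0).2; rewrite subnK ?(ltnW hts) //; lra.
Qed.

Definition pi y := sup (range (fun t => kpow P t z0 y - eps t)).

Lemma pi_ub y t a : pi y <= kpow P t a y + eps t.
Proof.
apply: ge_sup; first by exists (kpow P 0 z0 y - eps 0); exists 0%N.
by move=> _ [s _ <-]; apply: key_bound.
Qed.

Lemma pi_lb y t a : kpow P t a y - 2 * eps t <= pi y.
Proof.
have hs : has_sup (range (fun t => kpow P t z0 y - eps t)).
  split; first by exists (kpow P 0 z0 y - eps 0); exists 0%N.
  by exists (kpow P 0 z0 y + eps 0) => _ [s _ <-]; apply: key_bound.
have h1 : kpow P t z0 y - eps t <= pi y.
  by apply: sup_upper_bound => //; exists t.
have := osc_eps y t a z0; lra.
Qed.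

Lemma pi_dist y t a : `|kpow P t a y - pi y| <= 2 * eps t.
Proof.
rewrite ler_distl; have := pi_ub y t a; have := pi_lb y t a; have := eps_ge0 t.
move=> h0 h1 h2; apply/andP; split; lra.
Qed.


Section Recur.
Variable x : S.
Let Q := taboo P x.

Lemma Q0 a b : 0 <= Q a b.
Proof. by rewrite /Q /taboo; case: ifP. Qed.

Lemma QleP a b : Q a b <= P a b.
Proof. by rewrite /Q /taboo; case: ifP. Qed.

Lemma Qx a : Q a x = 0.
Proof. by rewrite /Q /taboo eqxx. Qed.

Lemma kpowQ_le t a b : kpow Q t a b <= kpow P t a b.
Proof.
elim: t a b => [|t IH] a b //.
rewrite !kpowS /kmul; apply: ler_sum => z _; apply: ler_pM => //.
- exact: kpow_ge0 Q0 _ _ _.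
- exact: Q0.
- exact: QleP.
Qed.

Lemma kpowQ_x t a : kpow Q t.+1 a x = 0.
Proof. by rewrite kpowS /kmul big1 // => z _; rewrite Qx mulr0. Qed.

Definition rs t a := \sum_b kpow Q t a b.

Lemma rs_ge0 t a : 0 <= rs t a.
Proof. by apply: sumr_ge0 => b _; apply: kpow_ge0 Q0 _ _ _. Qed.

Lemma rowsum (B A : S -> S -> R) c a : (forall u v, 0 <= B u v) ->
  (forall u v, 0 <= A u v) -> (forall z, \sum_y A z y <= c) ->
  \sum_y kmul B A a y <= c * \sum_z B a z.
Proof.
move=> B0 A0 hA; rewrite /kmul exchange_big /= mulr_sumr.
apply: ler_sum => z _; rewrite -big_distrr /= [c * _]mulrC.
by apply: ler_wpM2l.
Qed.

Lemma rs_S t a : rs t.+1 a <= rs t a.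
Proof.
rewrite /rs kpowS -[X in _ <= X]mul1r; apply: rowsum.
- exact: (kpow_ge0 Q0 _).
- exact: Q0.
- by move=> z; rewrite -(P1 z); apply: ler_sum => y _; apply: QleP.
Qed.

Lemma rs_m z : \sum_y kpow Q m z y <= rho0.
Proof.
have hx : kpow Q m z x = 0.
  by rewrite -(prednK Hm) kpowQ_x.
rewrite (bigD1 x) //= hx add0r.
have := kpow_sum1 P1 m z; rewrite (bigD1 x) //= => hs.
have : \sum_(y | y != x) kpow Q m z y <= \sum_(y | y != x) kpow P m z y.
  by apply: ler_sum => y _; apply: kpowQ_le.
have := delta_le z x; rewrite /rho0; lra.
Qed.

Lemma rs_add t a : rs (t + m) a <= rho0 * rs t a.
Proof.
rewrite /rs kpow_add; apply: rowsum.
- exact: (kpow_ge0 Q0 _).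
- exact: (kpow_ge0 Q0 _).
- exact: rs_m.
Qed.

Lemma rs_0 a : rs 0 a = 1.
Proof. exact: sum_kid. Qed.

Lemma rs_le1 t a : rs t a <= 1.
Proof.
elim: t => [|t IH]; first by rewrite rs_0.
exact: le_trans (rs_S t a) IH.
Qed.

Lemma rs_km k j a : rs (k * m + j) a <= rho0 ^+ k.
Proof.
elim: k => [|k IH]; first by rewrite mul0n add0n expr0 rs_le1.
rewrite mulSn -addnA addnC exprS.
apply: le_trans (rs_add _ _) _; apply: ler_wpM2l => //; exact: rho0_ge0.
Qed.

Lemma rs_eps t a : rs t a <= eps t.
Proof. by rewrite /eps {1}(div.divn_eq t m); apply: rs_km. Qed.

Lemma fr_id t : first_return P x t.+1 + rs t.+1 x = rs t x.
Proof.
have e1 : rs t x = \sum_y kmul (kpow Q t) P x y by rewrite /rs kmul_sum1.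
have e2 : rs t.+1 x = \sum_(y | y != x) kmul (kpow Q t) P x y.
  rewrite /rs (bigD1 x) //= -kpowS kpowQ_x add0r; apply: eq_bigr => y yx.
  by rewrite /kmul; apply: eq_bigr => z _; rewrite /Q /taboo (negPf yx).
by rewrite e1 e2 [in RHS](bigD1 x).
Qed.

Lemma fr_ge0 t : 0 <= first_return P x t.
Proof. apply: kmul_ge0 => //; exact: (kpow_ge0 Q0). Qed.

Lemma fr_partial n : \sum_(1 <= t < n.+1) first_return P x t = 1 - rs n x.
Proof.
elim: n => [|n IH]; first by rewrite big_geq // rs_0 subrr.
rewrite big_nat_recr //= IH -(fr_id n); ring.
Qed.

Lemma fr_partial' n : \sum_(1 <= t < n) first_return P x t = 1 - rs n.-1 x.
Proof. by case: n => [|n]; [rewrite big_geq // rs_0 subrr | exact: fr_partial]. Qed.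

Definition Ex n := \sum_(1 <= t < n) t%:R * first_return P x t.

Lemma Ex_id n : Ex n.+1 + n%:R * rs n x = \sum_(s < n) rs s x.
Proof.
elim: n => [|n IH]; first by rewrite /Ex big_geq // big_ord0 mul0r addr0.
rewrite /Ex big_nat_recr //= -/(Ex n.+1) big_ord_recr /= -IH -(fr_id n) -natr1.
ring.
Qed.

Lemma Ex_ge0 n : 0 <= Ex n.
Proof. by apply: sumr_ge0 => t _; apply: mulr_ge0; [apply: ler0n | apply: fr_ge0]. Qed.

Lemma Ex_le n : Ex n <= Ex n.+1.
Proof.
case: n => [|n]; first by rewrite /Ex big_geq //; apply: Ex_ge0.
rewrite /Ex [X in _ <= X]big_nat_recr //= lerDl; apply: mulr_ge0; [apply: ler0n | apply: fr_ge0].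
Qed.

End Recur.


Lemma mix_bound (w F : S -> R) e : (forall x, 0 <= w x) -> \sum_x w x = 1 ->
  (forall x, `|F x| <= e) -> `|\sum_x w x * F x| <= e.
Proof.
move=> w0 w1 hF; apply: le_trans (ler_norm_sum _ _ _) _.
apply: le_trans (_ : \sum_x w x * e <= _).
  apply: ler_sum => x _; rewrite normrM ger0_norm //; exact: ler_wpM2l.
by rewrite -big_distrl /= w1 mul1r.
Qed.

Lemma kpow_pos t a b : 0 < kpow P (t + m) a b.
Proof.
rewrite kpow_add /kmul; apply: lt_le_trans delta_gt0 _.
have e : \sum_z kpow P t a z * delta = delta.
  by rewrite -big_distrl /= kpow_sum1 ?mul1r.
rewrite -[X in X <= _]e; apply: ler_sum => z _; apply: ler_wpM2l.
  exact: kpow_ge0.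
exact: delta_le.
Qed.

Lemma P_le1 a b : P a b <= 1.
Proof. by have := kpow_le1 HP 1 a b; rewrite kpow1. Qed.

Theorem markov_main :
  irreducible P /\ aperiodic P /\
  (forall x, positive_recurrent P x) /\
  exists pi : S -> R,
    stationary P pi /\
    (forall pi', stationary P pi' -> pi' = pi) /\
    (forall mu0, prob_dist mu0 -> forall y,
       (fun t : nat => \sum_(x : S) mu0 x * kpow P t x y)
         @ \oo --> pi y) /\
    exists (C rho : R) (t0 : nat),
      0 < C /\ 0 < rho < 1 /\
      forall (t : nat) (x : S), (t0 <= t)%N ->
        \sum_(y : S) `|kpow P t x y - pi y| <= C * rho ^+ t.
Proof.
have [C [rho [C0 [/andP[rho_0 rho_1] heps]]]] := @geom R rho0 m
  (ltac:(by rewrite rho0_ge0 rho0_lt1)) Hm.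
have hr : 0 <= rho < 1 by rewrite ltW.
set D := 2 * C.
have D0 : 0 < D by rewrite /D mulr_gt0.
have dist : forall t a y, `|kpow P t a y - pi y| <= D * rho ^+ t.
  move=> t a y; apply: le_trans (pi_dist y t a) _.
  by rewrite /D -mulrA ler_pM2l //; apply: heps.
have rS : forall n, rho ^+ n.+1 <= rho ^+ n.
  by move=> n; rewrite exprSr ler_piMr ?exprn_ge0 // ltW.
split; first by move=> a b; exists m; apply: Hpos.
split.
  move=> a d hd.
  have h1 : (d %| m)%N := hd m Hm (Hpos a a).
  have h2 : (d %| 1 + m)%N := hd (1 + m)%N (ltn0Sn _) (kpow_pos 1 a a).
  by move: h2; rewrite (dvdn_addl _ h1) dvdn1 => /eqP.
split.
  move=> x; split.
    apply: (cvg_bound (C := C / rho) hr) => n.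
    rewrite fr_partial'.
    have -> : 1 - rs x n.-1 x - 1 = - rs x n.-1 x by ring.
    rewrite normrN ger0_norm ?rs_ge0 //.
    apply: le_trans (rs_eps _ _ _) _; apply: le_trans (heps _) _.
    case: n => [|n] /=.
      rewrite expr0 !mulr1 ler_pdivlMr // ler_piMr ?ltW //.
    by rewrite exprSr [rho ^+ n * rho]mulrC mulrA divfK ?gt_eqF.
  apply: nondecreasing_is_cvgn.
    by apply/nondecreasing_seqP => n; apply: Ex_le.
  have g1 : 0 < 1 - rho by rewrite subr_gt0.
  exists (C / (1 - rho)) => _ [n _ <-].
  case: n => [|n]; first by rewrite big_geq // divr_ge0 // ltW.
  have := Ex_id x n; rewrite /Ex => e.
  have hn : 0 <= n%:R * rs x n x by apply: mulr_ge0; [apply: ler0n | apply: rs_ge0].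
  apply: le_trans (_ : \sum_(s < n) rs x s x <= _); first by lra.
  apply: le_trans (_ : \sum_(s < n) C * rho ^+ s <= _).
    apply: ler_sum => s _; apply: le_trans (rs_eps _ _ _) (heps _).
  rewrite -big_distrr /= ler_pM2l //.
  have e2 := subrX1 rho n.
  have e3 : (1 - rho) * \sum_(i < n) rho ^+ i = 1 - rho ^+ n.
    by rewrite -opprB mulNr -e2 opprB.
  rewrite -(ler_pM2l g1) mulfV ?gt_eqF // e3.
  have := exprn_ge0 n (ltW rho_0); lra.
exists pi.
have pi0 : forall y, 0 <= pi y.
  move=> y; rewrite -[pi y]opprK oppr_ge0.
  apply: (vanish_le hr (ltW D0)) => n.
  have := dist n z0 y; rewrite ler_distl => /andP[h1 h2].
  have := kpow_ge0 P0 n z0 y; lra.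
have pi1 : \sum_y pi y = 1.
  apply/eqP; rewrite -subr_eq0; apply/eqP.
  apply: (vanish (C := D *+ #|S|) hr) => n.
  rewrite -(kpow_sum1 P1 n z0) -sumrB.
  apply: le_trans (ler_norm_sum _ _ _) _.
  apply: le_trans (_ : \sum_(y : S) D * rho ^+ n <= _).
    by apply: ler_sum => y _; rewrite distrC.
  by rewrite sumr_const mulrnAl.
have pist : stationary P pi.
  split; first by split.
  move=> y; apply/eqP; rewrite -subr_eq0; apply/eqP.
  apply: (vanish (C := D *+ #|S| + D) hr) => n.
  have e : \sum_x pi x * P x y - pi y =
      \sum_x (pi x - kpow P n z0 x) * P x y + (kpow P n.+1 z0 y - pi y).
    rewrite kpowS /kmul.
    have -> : \sum_x (pi x - kpow P n z0 x) * P x y =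
        \sum_x pi x * P x y - \sum_x kpow P n z0 x * P x y.
      by rewrite -sumrB; apply: eq_bigr => x _; rewrite mulrBl.
    ring.
  rewrite e; apply: le_trans (ler_normD _ _) _.
  rewrite mulrDl; apply: lerD; last first.
    by apply: le_trans (dist _ _ _) _; rewrite ler_pM2l.
  apply: le_trans (ler_norm_sum _ _ _) _.
  apply: le_trans (_ : \sum_(x : S) D * rho ^+ n <= _); last first.
    by rewrite sumr_const mulrnAl.
  apply: ler_sum => x _; rewrite normrM (ger0_norm (P0 _ _)).
  rewrite -[X in _ <= X]mulr1; apply: ler_pM => //; last exact: P_le1.
  by rewrite distrC.
split; first exact: pist.
split.
  move=> pi' [[pi'0 pi'1] pi'st].
  have inv : forall t y, \sum_x pi' x * kpow P t x y = pi' y.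
    elim=> [|t IH] y.
      rewrite /= /kid (bigD1 y) //= eqxx mulr1 big1 ?addr0 // => z /negPf.
      by rewrite eq_sym => ->; rewrite mulr0.
    rewrite kpowS /kmul.
    under eq_bigr do rewrite big_distrr.
    rewrite exchange_big /= -[RHS]pi'st; apply: eq_bigr => z _.
    rewrite -IH big_distrl /=; apply: eq_bigr => w _; by rewrite mulrA.
  apply/funext => y; apply/eqP; rewrite -subr_eq0; apply/eqP.
  apply: (vanish (C := D) hr) => n.
  have -> : pi' y - pi y = \sum_x pi' x * (kpow P n x y - pi y).
    under eq_bigr do rewrite mulrBr.
    by rewrite sumrB inv -big_distrl /= pi'1 mul1r.
  by apply: mix_bound => // x; apply: dist.
split.
  move=> mu0 [mu00 mu01] y.
  apply: (cvg_bound (C := D) hr) => n.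
  have -> : \sum_x mu0 x * kpow P n x y - pi y =
      \sum_x mu0 x * (kpow P n x y - pi y).
    under [RHS]eq_bigr do rewrite mulrBr.
    by rewrite sumrB -big_distrl /= mu01 mul1r.
  by apply: mix_bound => // x; apply: dist.
exists (D *+ #|S|), rho, 0%N; split.
  by rewrite pmulrn_lgt0 // card_pos.
split; first by rewrite rho_0 rho_1.
move=> t x _; apply: le_trans (_ : \sum_(y : S) D * rho ^+ t <= _).
  by apply: ler_sum => y _; apply: dist.
by rewrite sumr_const mulrnAl.
Qed.

End Markov.

Section Prim.
Variables (R : realType) (K : nat) (T : 'I_K -> 'I_K -> R).
Hypotheses (HT : row_stochastic T) (Hirr : irreducible T) (Hap : aperiodic T).

Lemma T_primitive : exists m, (0 < m)%N /\ forall i j, 0 < kpow T m i j.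
Proof.
have T0 : forall a b, 0 <= T a b := proj1 HT.
have HL : forall i : 'I_K, exists L, forall n, (L <= n)%N ->
    (0 < n)%N /\ 0 < kpow T n i i.
  move=> i; apply: (@semigroup_large (fun t => (0 < t)%N /\ 0 < kpow T t i i)).
  - by move=> t [].
  - move=> s t [s0 hs] [t0 ht]; split; first by rewrite addn_gt0 s0.
    apply: lt_le_trans (kpow_add_ge T0 s t i i i); exact: mulr_gt0.
  - move=> d hd; move: Hap; rewrite /aperiodic /aperiodic_state => h.
    by apply: (h i) => t t0 ht; apply: hd.
have [L HL'] := boolp.choice HL.
have Ht : forall p : 'I_K * 'I_K, exists t, 0 < kpow T t p.1 p.2.
  by move=> p; apply: Hirr.
have [tt Htt] := boolp.choice Ht.
exists (\max_i L i + \max_p tt p).+1; split => // i j.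
set M := (_ + _).+1.
have hle : (tt (i, j) <= M)%N.
  apply: leq_trans (leq_bigmax (i, j)) _; rewrite /M; lia.
have hL : (L i <= M - tt (i, j))%N.
  have := leq_bigmax (F := L) i; have := leq_bigmax (F := tt) (i, j); rewrite /M; lia.
rewrite -(subnK hle).
apply: lt_le_trans (kpow_add_ge T0 _ _ i i j).
apply: mulr_gt0; first by case: (HL' i _ hL).
exact: (Htt (i, j)).
Qed.

End Prim.

Section PCA.
Variables (R : realType) (N K nv : nat) (T : 'M[R]_K).
Hypotheses (hN : (1 <= N)%N) (hK : (1 <= K)%N)
  (HT : row_stochastic (fun i j : 'I_K => T i j)).

Let T' := fun i j : 'I_K => T i j.
Let T0 : forall a b, 0 <= T a b := proj1 HT.
Let T1 : forall a, \sum_b T a b = 1 := proj2 HT.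
Let S := {ffun 'I_N -> 'I_K}.
Let PP := @pca_P R N K nv T.

Lemma mem_nbhd (n : 'I_N) : n \in nbhd nv n.
Proof.
rewrite inE; apply/existsP.
have hk : (nv < 2 * nv + 1)%N by lia.
exists (Ordinal hk) => /=.
have -> : (n + nv + N * nv - nv = nv * N + n)%N by lia.
by rewrite modnMDl modn_small.
Qed.

Lemma card_nbhd_gt0 (n : 'I_N) : 0 < #|nbhd nv n|%:R :> R.
Proof. by rewrite ltr0n; apply/card_gt0P; exists n; apply: mem_nbhd. Qed.

Lemma PP_ge0 (x y : S) : 0 <= PP x y.
Proof.
apply: prodr_ge0 => n _; apply: mulr_ge0; first by rewrite invr_ge0 ler0n.
by apply: sumr_ge0.
Qed.

Lemma PP_sum1 (x : S) : \sum_y PP x y = 1.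
Proof.
rewrite /PP /pca_P.
rewrite -(bigA_distr_bigA (fun (n : 'I_N) (k : 'I_K) =>
   (#|nbhd nv n|%:R)^-1 * \sum_(i in nbhd nv n) T (x i) k)) /=.
apply: big1 => n _; rewrite -big_distrr /= exchange_big /=.
under eq_bigr do rewrite T1.
by rewrite sumr_const mulVf // gt_eqF // card_nbhd_gt0.
Qed.

Lemma PP_stoch : row_stochastic PP.
Proof. by split; [apply: PP_ge0 | apply: PP_sum1]. Qed.

Definition cc := \prod_(n : 'I_N) (#|nbhd nv n|%:R : R)^-1.

Lemma cc_gt0 : 0 < cc.
Proof. by apply: prodr_gt0 => n _; rewrite invr_gt0 card_nbhd_gt0. Qed.

Lemma PP_lb (x y : S) : cc * \prod_(n : 'I_N) T (x n) (y n) <= PP x y.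
Proof.
rewrite /cc /PP /pca_P -big_split /=; apply: ler_prod => n _.
apply/andP; split; first by apply: mulr_ge0; rewrite ?invr_ge0 ?ler0n.
apply: ler_wpM2l; first by rewrite invr_ge0 ler0n.
rewrite (bigD1 n) ?mem_nbhd //= lerDl; exact: sumr_ge0.
Qed.

Lemma PPpow_lb t (x y : S) :
  cc ^+ t.+1 * \prod_(n : 'I_N) kpow T' t.+1 (x n) (y n) <= kpow PP t.+1 x y.
Proof.
elim: t x y => [|t IH] x y.
  by rewrite !kpow1 expr1; apply: PP_lb.
rewrite [kpow PP t.+2]kpowS /kmul.
apply: le_trans (_ : \sum_(z : S) (cc ^+ t.+1 * \prod_n kpow T' t.+1 (x n) (z n)) *
   (cc * \prod_n T (z n) (y n)) <= _); last first.
  apply: ler_sum => z _; apply: ler_pM => //.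
  - apply: mulr_ge0; first exact/exprn_ge0/ltW/cc_gt0.
    by apply: prodr_ge0 => n _; apply: kpow_ge0.
  - by apply: mulr_ge0; [exact/ltW/cc_gt0 | apply: prodr_ge0].
  - exact: PP_lb.
rewrite le_eqVlt; apply/orP; left; apply/eqP; rewrite exprSr.
have -> : \sum_(z : S) (cc ^+ t.+1 * \prod_n kpow T' t.+1 (x n) (z n)) *
   (cc * \prod_n T (z n) (y n)) =
   cc ^+ t.+1 * cc * \sum_(z : S) \prod_n (kpow T' t.+1 (x n) (z n) * T (z n) (y n)).
  rewrite big_distrr /=; apply: eq_bigr => z _; rewrite big_split /=; ring.
congr (_ * _).
rewrite -(bigA_distr_bigA (fun (n : 'I_N) (k : 'I_K) =>
   kpow T' t.+1 (x n) k * T k (y n))) /=.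
by apply: eq_bigr => n _.
Qed.

End PCA.

Unset Implicit Arguments.

Theorem theorem2p10 (R : realType) (N K nv : nat) (T : 'M[R]_K) :
  (1 <= N)%N -> (1 <= K)%N ->
  row_stochastic (fun i j : 'I_K => T i j) ->
  irreducible (fun i j : 'I_K => T i j) ->
  aperiodic (fun i j : 'I_K => T i j) ->
  let P := @pca_P R N K nv T in
  irreducible P /\ aperiodic P /\
  (forall x, positive_recurrent P x) /\
  exists pi : {ffun 'I_N -> 'I_K} -> R,
    stationary P pi /\
    (forall pi', stationary P pi' -> pi' = pi) /\
    (forall mu0, prob_dist mu0 -> forall y,
       (fun t : nat => \sum_(x : {ffun 'I_N -> 'I_K}) mu0 x * kpow P t x y)
         @ \oo --> pi y) /\
    exists (C rho : R) (t0 : nat),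
      0 < C /\ 0 < rho < 1 /\
      forall (t : nat) (x : {ffun 'I_N -> 'I_K}), (t0 <= t)%N ->
        \sum_(y : {ffun 'I_N -> 'I_K}) `|kpow P t x y - pi y| <= C * rho ^+ t.
Proof.
move=> hN hK HT Hirr Hap P.
have [m [m0 hm]] := T_primitive HT Hirr Hap.
have hpos : forall a b, 0 < kpow P m a b.
  move=> a b; rewrite -(prednK m0).
  apply: lt_le_trans (PPpow_lb nv hN hK HT m.-1 a b).
  apply: mulr_gt0; first exact/exprn_gt0/(cc_gt0 R nv hN hK).
  by apply: prodr_gt0 => n _; rewrite prednK.
pose z0 : {ffun 'I_N -> 'I_K} := [ffun _ => Ordinal hK].
exact: (markov_main z0 (PP_stoch nv hN hK HT) m0 hpos).
Qed.
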